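(* Let $Q,P,t,V_1,V_2,\gamma$ and the points $X_q,X_p$ be as in the context. Then $$Q(X_p)P(X_p)+\int_{X_p}^{X_q}P\,dQ \;=\; Q(X_q)P(X_q)+\int_{X_q}^{X_p}Q\,dP \;=\; \big(PQ-V_1(Q)-V_2(P)\big)_0+2t\ln\gamma .$$ This common value is denoted $\mu$.
   Context: Fix integers $d_1,d_2\ge 1$. For complex parameters $\gamma\neq 0$, $\alpha_0,\dots,\alpha_{d_2}$, $\beta_0,\dots,\beta_{d_1}$ put $Q(\lambda)=\gamma\lambda+\sum_{j=0}^{d_2}\alpha_j\lambda^{-j}$ and $P(\lambda)=\frac{\gamma}{\lambda}+\sum_{j=0}^{d_1}\beta_j\lambda^j$, meromorphic functions on the Riemann sphere of $\lambda$. Write $\infty_Q$ for $\lambda=\infty$ and $\infty_P$ for $\lambda=0$. All residues $\mathrm{res}_p\,\omega$ are ordinary residues of meromorphic differentials at the point $p$ (so $\mathrm{res}_{\lambda=\infty}\frac{d\lambda}{\lambda}=-1$). Define $t=\mathrm{res}_{\infty_Q}P\,dQ$ $(=\mathrm{res}_{\infty_P}Q\,dP)$, $u_K=-\mathrm{res}_{\infty_Q}PQ^{-K}dQ$ for $1\le K\le d_1+1$, $v_J=-\mathrm{res}_{\infty_P}QP^{-J}dP$ for $1\le J\le d_2+1$, and $V_1(x)=\sum_{K=1}^{d_1+1}\frac{u_K}{K}x^K$, $V_2(y)=\sum_{J=1}^{d_2+1}\frac{v_J}{J}y^J$; thus $P=V_1'(Q)-\frac tQ+O(Q^{-2})$ near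 $\infty_Q$ and $Q=V_2'(P)-\frac tP+O(P^{-2})$ near $\infty_P$. For a Laurent polynomial $f(\lambda)$, $(f)_0$ denotes its coefficient of $\lambda^0$. The points $X_q,X_p\in\mathbb C^*$ (values of $\lambda$) are defined implicitly by requiring $-V_1(Q(\lambda))+t\ln Q(\lambda)+\int_{X_q}^{\lambda}P\,dQ=O(\lambda^{-1})$ as $\lambda\to\infty$ and $-V_2(P(\lambda))+t\ln P(\lambda)+\int_{X_p}^{\lambda}Q\,dP=O(\lambda)$ as $\lambda\to 0$, for fixed compatible choices of integration paths in $\mathbb C^*$ and of branches of the logarithms (used consistently throughout). *)

(* Defs.v *)
From Stdlib Require Import Reals.
From Coquelicot Require Import Coquelicot.

Local Open Scope C_scope.

(** Points of C^* are represented through a logarithmic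
    lift: the point λ = cexp ℓ.  Working on the universal cover (ℓ-plane)
    makes the "fixed compatible choices of integration paths and log branches"
    explicit: a lift of a path in C^* from cexp a to cexp b is a path from a
    to b in the ℓ-plane, and ln λ along the path is ℓ itself. *)
Definition cexp (z : C) : C :=
  (exp (Re z) * cos (Im z), exp (Re z) * sin (Im z))%R.

(** Line integral of the differential f(λ) dλ along the lift of a path in C^*
    from cexp a to cexp b, the lifted path being the segment [a,b] in the
    ℓ-plane (on the simply connected cover the result does not depend on the
    lifted path):  ∫_0^1 f(λ(s)) λ'(s) ds with λ(s) = cexp (a + s (b - a)). *)
Definition lint (f : C -> C) (a b : C) : C :=
  RInt (V := C_R_CompleteNormedModule)
    (fun s : R => let z := a + RtoC s * (b - a) in f (cexp z) * cexp z * (b - a))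
    0%R 1%R.

Definition two_pi_i : C := RtoC (2 * PI) * Ci.

(** Ordinary residue at λ = ∞ of f(λ) dλ: -(1/2πi) ∮_{|λ|=R} f dλ (positive
    orientation) for every sufficiently large R.  (The circle |λ| = R is the
    lift ℓ from ln R to ln R + 2πi.) *)
Definition is_res_inf (f : C -> C) (r : C) : Prop :=
  exists R0 : R, forall Rr : R, (R0 < Rr)%R ->
    lint f (RtoC (ln Rr)) (RtoC (ln Rr) + two_pi_i) = - two_pi_i * r.

Definition is_res_0 (f : C -> C) (res : C) : Prop :=
  exists r0 : R, (0 < r0)%R /\ forall r : R, (0 < r < r0)%R ->
    lint f (RtoC (ln r)) (RtoC (ln r) + two_pi_i) = two_pi_i * res.

Definition is_coef0 (f : C -> C) (c : C) : Prop :=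
  exists (N : nat) (a : nat -> C),
    (forall l : C, l <> 0 -> f l = sum_n (fun k => a k * l ^ k) (2 * N) / l ^ N)
    /\ a N = c.

Definition Qf (d2 : nat) (g : C) (al : nat -> C) (l : C) : C :=
  g * l + sum_n (fun j => al j * (/ l) ^ j) d2.
Definition dQf (d2 : nat) (g : C) (al : nat -> C) (l : C) : C :=
  g - sum_n (fun j => INR j * al j * (/ l) ^ (S j)) d2.

Definition Pf (d1 : nat) (g : C) (be : nat -> C) (l : C) : C :=
  g / l + sum_n (fun j => be j * l ^ j) d1.
Definition dPf (d1 : nat) (g : C) (be : nat -> C) (l : C) : C :=
  - g / (l ^ 2) + sum_n (fun j => INR j * be j * l ^ j / l) d1.

Definition Vpot (d : nat) (u : nat -> C) (x : C) : C :=
  sum_n (fun k => u (S k) / INR (S k) * x ^ (S k)) d.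

(* Main.v *)
Require Import Defs.
From Stdlib Require Import Reals.
From Coquelicot Require Import Coquelicot.
From Stdlib Require Import Lra Lia ZArith List.

Local Open Scope C_scope.

Lemma cexp_add : forall a b, cexp (a + b) = cexp a * cexp b.
Proof.
  intros [a1 a2] [b1 b2]; unfold cexp; simpl.
  apply injective_projections; simpl;
  rewrite exp_plus, ?cos_plus, ?sin_plus; ring.
Qed.

Lemma cexp_0 : cexp 0 = 1.
Proof.
  unfold cexp; simpl. rewrite exp_0, cos_0, sin_0.
  apply injective_projections; simpl; ring.
Qed.

Lemma cexp_neq0 : forall a, cexp a <> 0.
Proof.
  intros a H. assert (H1 := cexp_add a (-a)).
  replace (a + - a) with (RtoC 0) in H1 by ring.
  rewrite cexp_0, H in H1. 
  apply (f_equal fst) in H1. simpl in H1. lra.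
Qed.

Lemma cexp_iR : forall r : R, cexp (RtoC r * Ci) = (cos r, sin r).
Proof.
  intros r; unfold cexp, Ci; simpl.
  apply injective_projections; simpl;
  replace (r * 0 - 0 * 1)%R with 0%R by ring;
  replace (r * 1 + 0 * 0)%R with r by ring; rewrite exp_0; ring.
Qed.


Definition em (k : Z) (l : C) : C := cexp (RtoC (IZR k) * l).

Lemma em_add : forall i j l, em (i + j) l = em i l * em j l.
Proof. intros; unfold em. rewrite <- cexp_add, plus_IZR, RtoC_plus. f_equal; ring. Qed.
Lemma em_0 : forall l, em 0 l = 1.
Proof. intros; unfold em. replace (RtoC (IZR 0) * l) with (RtoC 0) by (simpl; ring). apply cexp_0. Qed.
Lemma em_1 : forall l, em 1 l = cexp l.
Proof. intros; unfold em. f_equal. simpl; ring. Qed.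
Lemma em_neq0 : forall k l, em k l <> 0.
Proof. intros; apply cexp_neq0. Qed.
Lemma em_nat : forall n l, em (Z.of_nat n) l = cexp l ^ n.
Proof.
  induction n; intros l. simpl. apply em_0.
  rewrite Nat2Z.inj_succ, <- Z.add_1_l, em_add, em_1, IHn. reflexivity.
Qed.
Lemma em_opp : forall k l, em (- k) l = / em k l.
Proof.
  intros k l. assert (H := em_add k (-k) l). rewrite Z.add_opp_diag_r, em_0 in H.
  assert (Hk := em_neq0 k l).
  transitivity (/ em k l * (em k l * em (-k) l)). field; auto.
  rewrite <- H. rewrite Cmult_1_r. reflexivity.
Qed.
Lemma em_negnat : forall n l, em (- Z.of_nat n) l = (/ cexp l) ^ n.
Proof. intros. rewrite em_opp, em_nat, Cpow_inv; auto using cexp_neq0. Qed.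


Definition term := (C * Z)%type.
Definition lsum (f : term -> C) (s : list term) : C :=
  fold_right (fun p acc => f p + acc) 0 s.

Lemma lsum_cons : forall f p s, lsum f (p :: s) = f p + lsum f s.
Proof. reflexivity. Qed.
Lemma lsum_app : forall f s1 s2, lsum f (s1 ++ s2) = lsum f s1 + lsum f s2.
Proof. intros f s1 s2; induction s1; simpl. ring. rewrite IHs1; ring. Qed.
Lemma lsum_ext : forall f g s, (forall p, f p = g p) -> lsum f s = lsum g s.
Proof. intros f g s H; induction s; simpl; auto. rewrite H, IHs; auto. Qed.
Lemma lsum_plus : forall f g s, lsum (fun p => f p + g p) s = lsum f s + lsum g s.
Proof. intros f g s; induction s; simpl. ring. rewrite IHs; ring. Qed.
Lemma lsum_scal : forall c f s, lsum (fun p => c * f p) s = c * lsum f s.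
Proof. intros c f s; induction s; simpl. ring. rewrite IHs; ring. Qed.
Lemma lsum_map : forall f h s, lsum f (map h s) = lsum (fun p => f (h p)) s.
Proof. intros f h s; induction s; simpl; auto. rewrite IHs; auto. Qed.
Lemma lsum_flat : forall f h s, lsum f (flat_map h s) = lsum (fun p => lsum f (h p)) s.
Proof. intros f h s; induction s; simpl; auto. rewrite lsum_app, IHs; auto. Qed.
Lemma lsum_swap : forall (F : term -> term -> C) s1 s2,
  lsum (fun p => lsum (fun q => F p q) s2) s1 = lsum (fun q => lsum (fun p => F p q) s1) s2.
Proof.
  intros F s1; induction s1; intros s2; simpl.
  - induction s2; simpl; auto. rewrite <- IHs2; ring.
  - rewrite IHs1, <- lsum_plus. reflexivity.
Qed.
Lemma lsum_minus : forall f g s, lsum (fun p => f p - g p) s = lsum f s - lsum g s.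
Proof. intros f g s; induction s; simpl. ring. rewrite IHs; ring. Qed.
Lemma lsum_zero : forall s, lsum (fun _ => 0) s = 0.
Proof. induction s; simpl; auto. rewrite IHs; ring. Qed.

Definition ev (s : list term) (l : C) : C := lsum (fun p => fst p * em (snd p) l) s.
Definition pr (p q : term) : term := (fst p * fst q, (snd p + snd q)%Z).
Definition mul (s1 s2 : list term) : list term := flat_map (fun p => map (pr p) s2) s1.
Definition scl (c : C) (s : list term) : list term := map (fun p => (c * fst p, snd p)) s.
Definition der (s : list term) : list term := map (fun p => (fst p * RtoC (IZR (snd p)), snd p)) s.
Definition cst (s : list term) : C := lsum (fun p => if Z.eqb (snd p) 0 then fst p else 0) s.
Definition at1 (p : term) (l : C) : C :=
  if Z.eqb (snd p) 0 then fst p * l else fst p / RtoC (IZR (snd p)) * em (snd p) l.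
Definition anti (s : list term) (l : C) : C := lsum (fun p => at1 p l) s.
Definition antiE (s : list term) : list term :=
  map (fun p => (if Z.eqb (snd p) 0 then RtoC 0 else fst p / RtoC (IZR (snd p)), snd p)) s.
Fixpoint pw (s : list term) (n : nat) : list term :=
  match n with O => (RtoC 1, 0%Z) :: nil | S n => mul s (pw s n) end.
Fixpoint sumL (F : nat -> list term) (n : nat) : list term :=
  match n with O => F O | S n => sumL F n ++ F (S n) end.
Fixpoint fs (f : nat -> C) (n : nat) : C :=
  match n with O => f O | S n => fs f n + f (S n) end.

Lemma sum_n_fs : forall f n, sum_n f n = fs f n.
Proof. intros f n; induction n; simpl. apply sum_O. rewrite sum_Sn, IHn. reflexivity. Qed.

Lemma lsum_mul : forall f s1 s2, lsum f (mul s1 s2) = lsum (fun p => lsum (fun q => f (pr p q)) s2) s1.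
Proof. intros; unfold mul. rewrite lsum_flat. apply lsum_ext; intros; apply lsum_map. Qed.
Lemma lsum_sumL : forall f F n, lsum f (sumL F n) = fs (fun k => lsum f (F k)) n.
Proof. intros f F n; induction n; simpl; auto. rewrite lsum_app, IHn; auto. Qed.

Lemma ev_app : forall s1 s2 l, ev (s1 ++ s2) l = ev s1 l + ev s2 l.
Proof. intros; apply lsum_app. Qed.
Lemma ev_mul : forall s1 s2 l, ev (mul s1 s2) l = ev s1 l * ev s2 l.
Proof.
  intros; unfold ev; rewrite lsum_mul.
  rewrite (lsum_ext _ (fun p => (fst p * em (snd p) l) * lsum (fun q => fst q * em (snd q) l) s2)).
  - rewrite Cmult_comm, <- lsum_scal. apply lsum_ext; intros; ring.
  - intros p. rewrite <- lsum_scal. apply lsum_ext; intros q. unfold pr; simpl.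
    rewrite em_add; ring.
Qed.
Lemma ev_scl : forall c s l, ev (scl c s) l = c * ev s l.
Proof. intros; unfold ev, scl; rewrite lsum_map, <- lsum_scal; apply lsum_ext; intros; simpl; ring. Qed.
Lemma ev_pw : forall s n l, ev (pw s n) l = ev s l ^ n.
Proof. intros s n l; induction n; simpl. unfold ev; simpl. rewrite em_0; ring.
  rewrite ev_mul, IHn; auto. Qed.
Lemma ev_sumL : forall F n l, ev (sumL F n) l = fs (fun k => ev (F k) l) n.
Proof. intros; apply lsum_sumL. Qed.
Lemma cst_app : forall s1 s2, cst (s1 ++ s2) = cst s1 + cst s2.
Proof. intros; apply lsum_app. Qed.
Lemma cst_scl : forall c s, cst (scl c s) = c * cst s.
Proof. intros; unfold cst, scl; rewrite lsum_map, <- lsum_scal; apply lsum_ext; intros; simpl.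
  destruct (Z.eqb _ _); ring. Qed.
Lemma cst_antiE : forall s, cst (antiE s) = 0.
Proof. intros; unfold cst, antiE; rewrite lsum_map. transitivity (lsum (fun _ => 0) s); [|apply lsum_zero]. apply lsum_ext; intros; simpl.
  destruct (Z.eqb _ _) eqn:E; auto. Qed.
Lemma anti_split : forall s l, anti s l = ev (antiE s) l + cst s * l.
Proof.
  intros; unfold anti, ev, antiE, cst. rewrite lsum_map, Cmult_comm, <- lsum_scal, <- lsum_plus.
  apply lsum_ext; intros p; unfold at1; simpl. destruct (Z.eqb _ _); simpl. ring. ring.
Qed.

Lemma at1_pair : forall p q l,
  at1 (pr p (fst q * RtoC (IZR (snd q)), snd q)) l + at1 (pr q (fst p * RtoC (IZR (snd p)), snd p)) l
  = fst (pr p q) * em (snd (pr p q)) l - (if Z.eqb (snd (pr p q)) 0 then fst (pr p q) else 0).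
Proof.
  intros [a i] [b j] l; unfold at1, pr; simpl.
  rewrite (Z.add_comm j i).
  destruct (Z.eqb_spec (i + j) 0) as [E|E].
  - rewrite E, em_0. assert (IZR j = - IZR i)%R. { rewrite <- opp_IZR. f_equal. lia. }
    rewrite H, RtoC_opp. ring.
  - assert (IZR (i + j) <> 0)%R by (apply not_0_IZR; auto).
    rewrite plus_IZR in *. rewrite RtoC_plus. field.
    intro H1. apply H. apply (f_equal fst) in H1. simpl in H1. exact H1.
Qed.

Lemma anti_pair : forall s1 s2 l,
  anti (mul s1 (der s2)) l + anti (mul s2 (der s1)) l = ev (mul s1 s2) l - cst (mul s1 s2).
Proof.
  intros. unfold anti, ev, cst, der. rewrite !lsum_mul.
  set (G := fun p q : term => at1 (pr p (fst q * RtoC (IZR (snd q)), snd q)) l).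
  transitivity (lsum (fun p => lsum (fun q => G p q) s2) s1 + lsum (fun p => lsum (fun q => G p q) s1) s2).
  { f_equal; apply lsum_ext; intros; rewrite lsum_map; reflexivity. }
  rewrite (lsum_swap G s2 s1).
  rewrite <- lsum_plus.
  rewrite <- lsum_minus.
  apply lsum_ext; intros p. rewrite <- lsum_minus, <- lsum_plus.
  apply lsum_ext; intros q. unfold G. rewrite at1_pair. ring.
Qed.


Lemma derive_fst : forall (f : R -> C_R_NormedModule) x f', is_derive f x f' ->
  is_derive (fun u => fst (f u)) x (fst f').
Proof.
  intros f x f' H. unfold is_derive in *.
  apply (filterdiff_comp' f (fun z : C_R_NormedModule => fst z) x _ (fun z : C_R_NormedModule => fst z) H).
  apply filterdiff_linear. apply (is_linear_fst (U := R_NormedModule) (V := R_NormedModule)).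
Qed.

Lemma derive_pairC : forall (f g : R -> R) x f' g', is_derive f x f' -> is_derive g x g' ->
  is_derive (V := C_R_NormedModule) (fun u => (f u, g u)) x (f', g').
Proof.
  intros f g x f' g' Hf Hg. unfold is_derive in *.
  apply (filterdiff_comp'_2 (U := R_NormedModule) (V := R_NormedModule) (W := C_R_NormedModule) f g (fun a b => (a, b)) x _ _ (fun a b => (a, b)) Hf Hg).
  apply filterdiff_linear. apply (is_linear_prod (T := prod_NormedModule R_AbsRing R_NormedModule R_NormedModule)
    (U := R_NormedModule) (V := R_NormedModule)); [apply is_linear_fst | apply is_linear_snd].
Qed.

Lemma D_cexp : forall c w0 w1 x,
  is_derive (V := C_R_NormedModule) (fun u : R => c * cexp (w0 + RtoC u * w1)) x (c * w1 * cexp (w0 + RtoC x * w1)).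
Proof.
  intros [c1 c2] [a b] [p q] x.
  apply is_derive_ext with (fun u : R =>
    ((c1 * (exp (a + u * p) * cos (b + u * q)) - c2 * (exp (a + u * p) * sin (b + u * q)))%R,
     (c1 * (exp (a + u * p) * sin (b + u * q)) + c2 * (exp (a + u * p) * cos (b + u * q)))%R)).
  { intros u. unfold cexp, Cmult, Cplus, RtoC; simpl.
    replace (a + (u * p - 0 * q))%R with (a + u * p)%R by ring.
    replace (b + (u * q + 0 * p))%R with (b + u * q)%R by ring. reflexivity. }
  set (E := exp (a + x * p)); set (Co := cos (b + x * q)); set (Si := sin (b + x * q)).
  match goal with |- is_derive _ _ ?D => replace D with
   (((c1*(p*E*Co - q*E*Si) - c2*(p*E*Si + q*E*Co))%R, (c1*(p*E*Si + q*E*Co) + c2*(p*E*Co - q*E*Si))%R) : C) end.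
  apply derive_pairC; auto_derive; auto; unfold E, Co, Si; ring.
  unfold E, Co, Si, cexp, Cmult, Cplus, RtoC; simpl.
  replace (a + (x * p - 0 * q))%R with (a + x * p)%R by ring.
  replace (b + (x * q + 0 * p))%R with (b + x * q)%R by ring.
  apply injective_projections; simpl; ring.
Qed.

Lemma D_lin : forall c w0 w1 x,
  is_derive (V := C_R_NormedModule) (fun u : R => c * (w0 + RtoC u * w1)) x (c * w1).
Proof.
  intros [c1 c2] [a b] [p q] x.
  apply is_derive_ext with (fun u : R =>
    ((c1 * (a + u * p) - c2 * (b + u * q))%R, (c1 * (b + u * q) + c2 * (a + u * p))%R)).
  { intros u. unfold Cmult, Cplus, RtoC; simpl. apply injective_projections; simpl; ring. }
  match goal with |- is_derive _ _ ?D => replace D with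
   (((c1*p - c2*q)%R, (c1*q + c2*p)%R) : C) end.
  apply derive_pairC; auto_derive; auto; ring.
  unfold Cmult; simpl. apply injective_projections; simpl; ring.
Qed.

Lemma plusC : forall x y : C, plus (G := C_R_NormedModule) x y = x + y.
Proof. reflexivity. Qed.
Lemma zeroC : zero (G := C_R_NormedModule) = RtoC 0.
Proof. reflexivity. Qed.

Lemma D_anti : forall s a b x,
  is_derive (V := C_R_NormedModule) (fun u : R => anti s (a + RtoC u * (b - a))) x
    (ev s (a + RtoC x * (b - a)) * (b - a)).
Proof.
  induction s as [|p s IH]; intros a b x.
  - unfold anti, ev; simpl. rewrite Cmult_0_l, <- zeroC. apply is_derive_const.
  - unfold anti, ev; simpl. fold (anti s) (ev s).
    rewrite Cmult_plus_distr_r, <- plusC.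
    apply (is_derive_plus (V := C_R_NormedModule) (fun u : R => at1 p (a + RtoC u * (b - a)))).
    2: apply IH.
    unfold at1. destruct (Z.eqb_spec (snd p) 0) as [E|E].
    + rewrite E, em_0, Cmult_1_r. apply D_lin.
    + assert (Hk : RtoC (IZR (snd p)) <> 0).
      { intro H. apply (f_equal fst) in H. simpl in H. apply E. apply eq_IZR. exact H. }
      unfold em.
      apply is_derive_ext with (fun u : R => fst p / RtoC (IZR (snd p)) *
         cexp (RtoC (IZR (snd p)) * a + RtoC u * (RtoC (IZR (snd p)) * (b - a)))).
      { intros u. f_equal. f_equal. ring. }
      match goal with |- is_derive _ _ ?D => replace D with
        (fst p / RtoC (IZR (snd p)) * (RtoC (IZR (snd p)) * (b - a)) *
         cexp (RtoC (IZR (snd p)) * a + RtoC x * (RtoC (IZR (snd p)) * (b - a)))) end.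
      apply D_cexp.
      replace (RtoC (IZR (snd p)) * a + RtoC x * (RtoC (IZR (snd p)) * (b - a)))
        with (RtoC (IZR (snd p)) * (a + RtoC x * (b - a))) by ring.
      field. exact Hk.
Qed.

Lemma D_ev_ex : forall s a b x,
  ex_derive (V := C_R_NormedModule) (fun u : R => ev s (a + RtoC u * (b - a)) * (b - a)) x.
Proof.
  induction s as [|p s IH]; intros a b x.
  - unfold ev; simpl. apply ex_derive_const.
  - unfold ev; simpl. fold (ev s).
    apply ex_derive_ext with (fun u : R => plus (G := C_R_NormedModule)
      ((fst p * (b - a)) * cexp (RtoC (IZR (snd p)) * a + RtoC u * (RtoC (IZR (snd p)) * (b - a))))
      (ev s (a + RtoC u * (b - a)) * (b - a))).
    { intros u. rewrite plusC. unfold em. 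
      assert (E : RtoC (IZR (snd p)) * a + RtoC u * (RtoC (IZR (snd p)) * (b - a))
        = RtoC (IZR (snd p)) * (a + RtoC u * (b - a))) by ring. rewrite E.
      change (fst p * (b - a) * cexp (RtoC (IZR (snd p)) * (a + RtoC u * (b - a))) + ev s (a + RtoC u * (b - a)) * (b - a)
       = (fst p * cexp (RtoC (IZR (snd p)) * (a + RtoC u * (b - a))) + ev s (a + RtoC u * (b - a))) * (b - a)).
      ring. }
    apply ex_derive_plus. eexists. apply D_cexp. apply IH.
Qed.

Lemma lint_anti : forall f s a b, (forall z, f (cexp z) * cexp z = ev s z) ->
  lint f a b = anti s b - anti s a.
Proof.
  intros f s a b Hf. unfold lint. apply (is_RInt_unique (V := C_R_CompleteNormedModule)).
  apply is_RInt_ext with (fun u : R => ev s (a + RtoC u * (b - a)) * (b - a)).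
  { intros u _. simpl. rewrite Hf. reflexivity. }
  replace (anti s b - anti s a) with
    (minus (G := C_R_NormedModule) (anti s (a + RtoC 1 * (b - a))) (anti s (a + RtoC 0 * (b - a)))).
  2:{ assert (E1 : a + RtoC 1 * (b - a) = b) by ring. assert (E0 : a + RtoC 0 * (b - a) = a) by ring.
        rewrite E1, E0. reflexivity. }
  apply (is_RInt_derive (V := C_R_CompleteNormedModule) (fun u : R => anti s (a + RtoC u * (b - a)))).
  - intros x _. apply D_anti.
  - intros x _. apply (ex_derive_continuous (K := R_AbsRing) (V := C_R_NormedModule)). apply D_ev_ex.
Qed.


Lemma fs_ext : forall f g n, (forall j, f j = g j) -> fs f n = fs g n.
Proof. intros f g n H; induction n; simpl; rewrite ?IHn, ?H; auto. Qed.
Lemma fs_plus : forall f g n, fs (fun j => f j + g j) n = fs f n + fs g n.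
Proof. intros f g n; induction n; simpl; auto. rewrite IHn; ring. Qed.
Lemma fs_scal : forall c f n, fs (fun j => c * f j) n = c * fs f n.
Proof. intros c f n; induction n; simpl; auto. rewrite IHn; ring. Qed.
Lemma fs_const : forall c n, fs (fun _ => c) n = RtoC (INR (S n)) * c.
Proof. intros c n; induction n. simpl. ring. simpl fs. rewrite IHn. rewrite (S_INR (S n)), RtoC_plus. ring. Qed.
Lemma geom : forall w n, (1 - w) * fs (fun j => w ^ j) n = 1 - w ^ (S n).
Proof. intros w n; induction n; simpl. ring. rewrite Cmult_plus_distr_l, IHn. simpl. ring. Qed.
Lemma Cmod_fs : forall f n d, (forall j, Cmod (f j) <= d)%R -> (Cmod (fs f n) <= INR (S n) * d)%R.
Proof.
  intros f n d H; induction n; simpl fs.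
  - simpl. rewrite Rmult_1_l. apply H.
  - eapply Rle_trans. apply Cmod_triangle. rewrite (S_INR (S n)). specialize (H (S n)). lra.
Qed.

Definition th (M j : nat) : R := (INR j * (2 * PI / INR (S M)))%R.
Definition pt (x : R) (M j : nat) : C := RtoC x + RtoC (th M j) * Ci.
Definition mean (M : nat) (x : R) (h : C -> C) : C := fs (fun j => h (pt x M j)) M / RtoC (INR (S M)).

Lemma cexp_iR_nat : forall j phi, cexp (RtoC (INR j * phi) * Ci) = cexp (RtoC phi * Ci) ^ j.
Proof.
  induction j; intros phi.
  - simpl. rewrite Rmult_0_l. replace (RtoC 0 * Ci) with (RtoC 0) by ring. apply cexp_0.
  - rewrite S_INR, Cpow_S, <- IHj, <- cexp_add. f_equal.
    replace ((INR j + 1) * phi)%R with (phi + INR j * phi)%R by ring. rewrite RtoC_plus. ring.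
Qed.

Lemma sin_kPI : forall k, sin (IZR k * PI) = 0%R.
Proof. intros; apply sin_eq_0_1; eauto. Qed.

Lemma omega_pow : forall (k : Z) M,
  cexp (RtoC (IZR k * (2 * PI / INR (S M))) * Ci) ^ (S M) = 1.
Proof.
  intros k M. rewrite <- cexp_iR_nat, cexp_iR.
  replace (INR (S M) * (IZR k * (2 * PI / INR (S M))))%R with (2 * (IZR k * PI))%R.
  2:{ field. apply not_0_INR. lia. }
  rewrite cos_2a_sin, sin_2a, sin_kPI. apply injective_projections; simpl; ring.
Qed.

Lemma omega_ne1 : forall (k : Z) M, k <> 0%Z -> (Z.abs k <= Z.of_nat M)%Z ->
  cexp (RtoC (IZR k * (2 * PI / INR (S M))) * Ci) <> 1.
Proof.
  intros k M Hk HM. rewrite cexp_iR. intro H.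
  set (phi := (IZR k * (2 * PI / INR (S M)))%R) in *.
  assert (Hc : cos phi = 1%R) by (apply (f_equal fst) in H; exact H).
  assert (Hs : sin phi = 0%R) by (apply (f_equal snd) in H; exact H).
  destruct (sin_eq_0_0 _ Hs) as [m Hm].
  assert (HSM : (0 < INR (S M))%R) by (apply lt_0_INR; lia).
  assert (Hk1 : (Rabs (IZR k) <= INR M)%R).
  { rewrite Rabs_Zabs, INR_IZR_INZ. apply IZR_le. exact HM. }
  assert (HSM' : INR (S M) = (INR M + 1)%R) by apply S_INR.
  assert (Hphi : (Rabs phi < 2 * PI)%R).
  { unfold phi. rewrite Rabs_mult, (Rabs_right (2 * PI / INR (S M))).
    2:{ apply Rle_ge, Rlt_le, Rdiv_lt_0_compat; [pose proof PI_RGT_0; lra | exact HSM]. }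
    apply Rlt_le_trans with (INR (S M) * (2 * PI / INR (S M)))%R.
    apply Rmult_lt_compat_r. apply Rdiv_lt_0_compat; [pose proof PI_RGT_0; lra | exact HSM]. lra.
    right. field. lra. }
  assert (Hphi0 : phi <> 0%R).
  { unfold phi. apply Rmult_integral_contrapositive. split. apply not_0_IZR; auto.
    apply Rgt_not_eq, Rdiv_lt_0_compat; [pose proof PI_RGT_0; lra | exact HSM]. }
  rewrite Hm in Hphi, Hphi0, Hc. rewrite Rabs_mult, (Rabs_right PI) in Hphi by (pose proof PI_RGT_0; lra).
  assert (Hm2 : (Rabs (IZR m) < 2)%R).
  { pose proof PI_RGT_0. apply Rmult_lt_reg_r with PI; auto. }
  rewrite Rabs_Zabs in Hm2. apply lt_IZR in Hm2.
  assert (m = 0 \/ m = 1 \/ m = -1)%Z as [E|[E|E]] by lia; subst m.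
  - apply Hphi0. ring.
  - rewrite Rmult_1_l, cos_PI in Hc. lra.
  - replace (IZR (-1) * PI)%R with (- PI)%R in Hc by (simpl; ring). rewrite cos_neg, cos_PI in Hc. lra.
Qed.

Lemma fs_em : forall k x M, (Z.abs k <= Z.of_nat M)%Z ->
  fs (fun j => em k (pt x M j)) M = if Z.eqb k 0 then RtoC (INR (S M)) else 0.
Proof.
  intros k x M HM. destruct (Z.eqb_spec k 0) as [E|E].
  - subst. rewrite (fs_ext _ (fun _ => 1)). rewrite fs_const. ring. intros; apply em_0.
  - set (w := cexp (RtoC (IZR k * (2 * PI / INR (S M))) * Ci)).
    rewrite (fs_ext _ (fun j => em k (RtoC x) * w ^ j)).
    + rewrite fs_scal.
      assert (Hw : 1 - w <> 0). { intro H. apply (omega_ne1 k M E HM). fold w. 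
        transitivity (w + (1 - w)). rewrite H; ring. ring. }
      assert (G := geom w M). assert (Hp : w ^ S M = 1) by (unfold w; apply omega_pow). rewrite Hp in G.
      change (fun j => w ^ j) with (Cpow w) in G.
      replace (fs (Cpow w) M) with (/ (1 - w) * ((1 - w) * fs (Cpow w) M)) by (field; auto).
      rewrite G. ring.
    + intros j. unfold w. rewrite <- cexp_iR_nat. unfold em, pt, th. rewrite <- cexp_add. f_equal.
      rewrite !RtoC_mult. ring.
Qed.

Lemma mean_ev : forall s M x, (forall p, In p s -> (Z.abs (snd p) <= Z.of_nat M)%Z) ->
  mean M x (ev s) = cst s.
Proof.
  intros s M x H. unfold mean.
  assert (HS : RtoC (INR (S M)) <> 0).
  { intro E. apply (f_equal fst) in E. simpl in E. apply (not_0_INR (S M)); auto. }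
  cut (fs (fun j => ev s (pt x M j)) M = RtoC (INR (S M)) * cst s).
  { intros E; rewrite E. field. auto. }
  induction s as [|p s IH].
  - unfold ev, cst; simpl. rewrite fs_const. ring.
  - unfold ev, cst in *. rewrite !lsum_cons. rewrite (fs_ext _ (fun j => fst p * em (snd p) (pt x M j) + lsum (fun p0 : term => fst p0 * em (snd p0) (pt x M j)) s)) by (intros; apply lsum_cons).
    rewrite fs_plus, fs_scal, IH.
    2:{ intros q Hq. apply H. right. exact Hq. }
    rewrite fs_em. 2:{ apply H. left. reflexivity. }
    destruct (Z.eqb _ _); ring.
Qed.

Lemma mean_bound : forall M x h c d, (forall j, Cmod (h (pt x M j) - c) <= d)%R ->
  (Cmod (mean M x h - c) <= d)%R.
Proof.
  intros M x h c d H. unfold mean.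
  assert (HS : (0 < INR (S M))%R) by (apply lt_0_INR; lia).
  assert (HS' : RtoC (INR (S M)) <> 0).
  { intro E. apply (f_equal fst) in E. change (INR (S M) = 0%R) in E. lra. }
  replace (fs (fun j => h (pt x M j)) M / RtoC (INR (S M)) - c) with
    (fs (fun j => h (pt x M j) - c) M / RtoC (INR (S M))).
  2:{ unfold Cminus. rewrite fs_plus, fs_const. field. auto. }
  rewrite Cmod_div by auto. rewrite Cmod_R. rewrite Rabs_right by lra.
  apply Rmult_le_reg_r with (INR (S M)); auto.
  unfold Rdiv. rewrite Rmult_assoc, Rinv_l, Rmult_1_r by lra.
  rewrite Rmult_comm. apply Cmod_fs. exact H.
Qed.

Lemma exists_bound_M : forall s : list term, exists M : nat, forall p, In p s -> (Z.abs (snd p) <= Z.of_nat M)%Z.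
Proof.
  induction s as [|q s [M HM]].
  - exists O. intros p [].
  - exists (Nat.max M (Z.abs_nat (snd q))). intros p [E|H].
    + subst. lia.
    + specialize (HM p H). lia.
Qed.



Lemma em_period : forall k z, em k (z + RtoC (2 * PI) * Ci) = em k z.
Proof.
  intros k z. unfold em.
  replace (RtoC (IZR k) * (z + RtoC (2 * PI) * Ci)) with (RtoC (IZR k) * z + RtoC (2 * (IZR k * PI)) * Ci)
    by (rewrite !RtoC_mult; ring).
  rewrite cexp_add, cexp_iR, cos_2a_sin, sin_2a, sin_kPI.
  replace ((1 - 2 * 0 * 0)%R, (2 * 0 * cos (IZR k * PI))%R) with (RtoC 1)
    by (apply injective_projections; simpl; ring).
  ring.
Qed.

Lemma ev_period : forall s z, ev s (z + RtoC (2 * PI) * Ci) = ev s z.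
Proof. intros; unfold ev; apply lsum_ext; intros; rewrite em_period; auto. Qed.

Lemma Cmod_small : forall a : C, (forall d, (0 < d)%R -> (Cmod a <= d)%R) -> a = 0.
Proof.
  intros a H. apply Cmod_eq_0. pose proof (Cmod_ge_0 a).
  destruct (Rle_lt_dec (Cmod a) 0). lra.
  specialize (H (Cmod a / 2)%R). lra.
Qed.

Lemma asym : forall sG a C1,
  (forall d, (0 < d)%R -> exists x : R, forall th : R,
     (Cmod (ev sG (RtoC x + RtoC th * Ci) + a * (RtoC x + RtoC th * Ci) + C1) <= d)%R) ->
  a = 0 /\ cst sG + C1 = 0.
Proof.
  intros sG a C1 H.
  assert (Ha : a = 0).
  { apply Cmod_small. intros d Hd.
    destruct (H (d * PI / 2)%R) as [x Hx].
    { pose proof PI_RGT_0. apply Rmult_lt_0_compat; [apply Rmult_lt_0_compat|]; lra. }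
    pose proof (Hx 0%R) as H0. pose proof (Hx (2 * PI)%R) as H1.
    replace (RtoC x + RtoC (2 * PI) * Ci) with ((RtoC x + RtoC 0 * Ci) + RtoC (2 * PI) * Ci) in H1
      by (rewrite !RtoC_mult; ring).
    rewrite ev_period in H1.
    set (F := ev sG (RtoC x + RtoC 0 * Ci) + a * (RtoC x + RtoC 0 * Ci) + C1) in *.
    assert (E : a * (RtoC (2 * PI) * Ci) = (F + a * (RtoC (2 * PI) * Ci)) - F) by ring.
    assert (Hm : (Cmod (a * (RtoC (2 * PI) * Ci)) <= d * PI)%R).
    { rewrite E. unfold Cminus. eapply Rle_trans. apply Cmod_triangle. rewrite Cmod_opp.
      replace (F + a * (RtoC (2 * PI) * Ci)) with
        (ev sG (RtoC x + RtoC 0 * Ci) + a * (RtoC x + RtoC 0 * Ci + RtoC (2 * PI) * Ci) + C1)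
        by (unfold F; ring). lra. }
    rewrite !Cmod_mult, Cmod_R in Hm.
    assert (Ci1 : Cmod Ci = 1%R).
    { unfold Cmod, Ci; simpl. replace (0 * (0 * 1) + 1 * (1 * 1))%R with 1%R by ring. apply sqrt_1. }
    rewrite Ci1, Rabs_right in Hm by (pose proof PI_RGT_0; lra).
    pose proof PI_RGT_0. pose proof (Cmod_ge_0 a). nra. }
  split; auto. subst a.
  destruct (exists_bound_M sG) as [M HM].
  apply Cmod_small. intros d Hd. destruct (H d Hd) as [x Hx].
  rewrite <- (mean_ev sG M x HM).
  replace (mean M x (ev sG) + C1) with (mean M x (ev sG) - (- C1)) by ring.
  apply mean_bound. intros j. unfold pt.
  specialize (Hx (th M j)).
  replace (ev sG (RtoC x + RtoC (th M j) * Ci) - - C1) with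
    (ev sG (RtoC x + RtoC (th M j) * Ci) + 0 * (RtoC x + RtoC (th M j) * Ci) + C1) by ring.
  exact Hx.
Qed.


Lemma ev_single : forall c k l, ev ((c, k) :: nil) l = c * em k l.
Proof. intros; unfold ev; rewrite lsum_cons; simpl. ring. Qed.
Lemma ev_cons : forall c k s l, ev ((c, k) :: s) l = c * em k l + ev s l.
Proof. intros; unfold ev; rewrite lsum_cons; reflexivity. Qed.
Lemma ev_der : forall s l, ev (der s) l = lsum (fun p => fst p * RtoC (IZR (snd p)) * em (snd p) l) s.
Proof. intros; unfold ev, der; rewrite lsum_map; reflexivity. Qed.

Lemma em_m1 : forall l, em (-1) l = / cexp l.
Proof. intros. change (-1)%Z with (Z.opp 1). rewrite em_opp, em_1. reflexivity. Qed.

Definition sQ d2 g al : list term := (g, 1%Z) :: sumL (fun j => (al j, (- Z.of_nat j)%Z) :: nil) d2.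
Definition sP d1 g be : list term := (g, (-1)%Z) :: sumL (fun j => (be j, Z.of_nat j) :: nil) d1.

Lemma Q_ev : forall d2 g al l, Qf d2 g al (cexp l) = ev (sQ d2 g al) l.
Proof.
  intros; unfold Qf, sQ. rewrite ev_cons, em_1, ev_sumL, sum_n_fs. f_equal.
  apply fs_ext; intros j. rewrite ev_single, em_negnat. reflexivity.
Qed.

Lemma P_ev : forall d1 g be l, Pf d1 g be (cexp l) = ev (sP d1 g be) l.
Proof.
  intros; unfold Pf, sP. rewrite ev_cons, ev_sumL, sum_n_fs. f_equal.
  - rewrite em_m1. reflexivity.
  - apply fs_ext; intros j. rewrite ev_single, em_nat. reflexivity.
Qed.

Lemma lsum_single : forall f p, lsum f (p :: nil) = f p.
Proof. intros; unfold lsum; simpl; ring. Qed.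

Lemma dQ_ev : forall d2 g al l, dQf d2 g al (cexp l) * cexp l = ev (der (sQ d2 g al)) l.
Proof.
  intros. rewrite ev_der. unfold sQ. rewrite lsum_cons, lsum_sumL. simpl (fst _); simpl (snd _).
  rewrite em_1. unfold dQf. rewrite sum_n_fs.
  assert (Hc := cexp_neq0 l).
  unfold Cminus. rewrite Cmult_plus_distr_r. f_equal. simpl. ring.
  match goal with |- - fs ?F _ * _ = _ => replace (- fs F d2 * cexp l) with ((- cexp l) * fs F d2) by ring end.
  rewrite <- fs_scal.
  apply fs_ext; intros j. rewrite lsum_single. simpl (fst _); simpl (snd _).
  rewrite em_negnat, opp_IZR, <- INR_IZR_INZ, RtoC_opp. simpl Cpow. field. auto.
Qed.

Lemma dP_ev : forall d1 g be l, dPf d1 g be (cexp l) * cexp l = ev (der (sP d1 g be)) l.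
Proof.
  intros. rewrite ev_der. unfold sP. rewrite lsum_cons, lsum_sumL. simpl (fst _); simpl (snd _).
  rewrite em_m1. unfold dPf. rewrite sum_n_fs.
  assert (Hc := cexp_neq0 l).
  rewrite Cmult_plus_distr_r. f_equal. simpl. field. auto.
  rewrite Cmult_comm, <- fs_scal.
  apply fs_ext; intros j. rewrite lsum_single. simpl (fst _); simpl (snd _).
  rewrite em_nat, <- INR_IZR_INZ. field. auto.
Qed.


Definition sV (d : nat) (u : nat -> C) (s : list term) : list term :=
  sumL (fun k => scl (u (S k) / RtoC (INR (S k))) (pw s (S k))) d.

Lemma V_ev : forall d u s l, Vpot d u (ev s l) = ev (sV d u s) l.
Proof.
  intros; unfold Vpot, sV. rewrite sum_n_fs, ev_sumL. apply fs_ext; intros k.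
  rewrite ev_scl, ev_pw. reflexivity.
Qed.

Lemma fs_S : forall f n, fs f (S n) = fs f n + f (S n).
Proof. reflexivity. Qed.

Lemma fs_delta : forall (a : nat -> C) N n,
  fs (fun k => if Z.eqb (Z.of_nat k - Z.of_nat N) 0 then a k else 0) n = if Nat.leb N n then a N else 0.
Proof.
  intros a N n; induction n.
  - change (fs ?F 0%nat) with (F 0%nat). cbv beta. destruct N; simpl; auto.
  - rewrite fs_S, IHn. cbv beta. destruct (Z.eqb_spec (Z.of_nat (S n) - Z.of_nat N) 0) as [E|E].
    + assert (N = S n) by lia. subst. rewrite Nat.leb_refl.
      replace (Nat.leb (S n) n) with false by (symmetry; apply Nat.leb_gt; lia). ring.
    + destruct (Nat.leb_spec N n); destruct (Nat.leb_spec N (S n)); try lia; try ring.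
Qed.

Lemma coef_cst : forall f c0, is_coef0 f c0 ->
  exists sc : list term, (forall l, f (cexp l) = ev sc l) /\ cst sc = c0.
Proof.
  intros f c0 [N [a [Hf Ha]]].
  exists (sumL (fun k => (a k, (Z.of_nat k - Z.of_nat N)%Z) :: nil) (2 * N)). split.
  - intros l. rewrite Hf by apply cexp_neq0. rewrite sum_n_fs, ev_sumL.
    unfold Cdiv. rewrite Cmult_comm, <- fs_scal. apply fs_ext; intros k.
    rewrite ev_single.
    replace (Z.of_nat k - Z.of_nat N)%Z with (Z.of_nat k + - Z.of_nat N)%Z by lia.
    rewrite em_add, em_nat, em_opp, em_nat. ring.
  - unfold cst. rewrite lsum_sumL.
    rewrite (fs_ext _ (fun k => if Z.eqb (Z.of_nat k - Z.of_nat N) 0 then a k else 0)).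
    + rewrite fs_delta. replace (Nat.leb N (2 * N)) with true by (symmetry; apply Nat.leb_le; lia). auto.
    + intros k. rewrite lsum_single. reflexivity.
Qed.

Lemma cst_unique : forall s1 s2, (forall l, ev s1 l = ev s2 l) -> cst s1 = cst s2.
Proof.
  intros s1 s2 H. destruct (exists_bound_M (s1 ++ s2)) as [M HM].
  rewrite <- (mean_ev s1 M 0), <- (mean_ev s2 M 0).
  - unfold mean. f_equal. apply fs_ext; intros; apply H.
  - intros p Hp; apply HM, in_or_app; auto.
  - intros p Hp; apply HM, in_or_app; auto.
Qed.


Lemma small_exp : forall K0 d, (0 < d)%R -> exists X, forall x, (X <= x)%R -> (K0 * exp (- x) <= d / 2)%R.
Proof.
  intros K0 d Hd. set (K := (Rabs K0 + 1)%R).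
  assert (HK : (0 < K)%R) by (unfold K; pose proof (Rabs_pos K0); lra).
  exists (ln (2 * K / d)). intros x Hx.
  assert (H1 : (exp (- x) <= d / (2 * K))%R).
  { replace (d / (2 * K))%R with (exp (- ln (2 * K / d))).
    - destruct (Rle_lt_or_eq_dec _ _ Hx) as [H|H].
      + left. apply exp_increasing. lra.
      + rewrite H. lra.
    - rewrite exp_Ropp, exp_ln. field. split; lra.
      apply Rdiv_lt_0_compat; lra. }
  assert (H2 : (K0 <= K)%R) by (unfold K; pose proof (Rle_abs K0); lra).
  pose proof (exp_pos (- x)).
  apply Rle_trans with (K * exp (- x))%R. apply Rmult_le_compat_r; lra.
  apply Rle_trans with (K * (d / (2 * K)))%R. apply Rmult_le_compat_l; lra.
  right. field. lra.
Qed.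

Lemma Re_line : forall x th : R, Re (RtoC x + RtoC th * Ci) = x.
Proof. intros; unfold Re, Ci; simpl; ring. Qed.

Lemma asym_apply : forall (sgm : R) sG a C1 (E Lg : C -> C) t K0 R0,
  (sgm * sgm = 1)%R ->
  (forall l, (R0 <= sgm * Re l)%R -> (Cmod (E l) <= K0 * exp (- (sgm * Re l)))%R) ->
  (forall eps, (0 < eps)%R -> exists R1, forall l, (R1 <= sgm * Re l)%R -> (Cmod (Lg l) < eps)%R) ->
  (forall l, ev sG l + a * l + C1 = E l - t * Lg l) ->
  a = 0 /\ cst sG + C1 = 0.
Proof.
  intros sgm sG a C1 E Lg t K0 R0 Hs HE HL Heq.
  apply asym. intros d Hd.
  pose proof (Cmod_ge_0 t) as Ht.
  destruct (HL (d / (2 * (Cmod t + 1)))%R) as [R1 HR1].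
  { apply Rdiv_lt_0_compat; lra. }
  destruct (small_exp K0 d Hd) as [X HX].
  set (m := Rmax R0 (Rmax R1 X)).
  exists (sgm * m)%R. intros th.
  assert (Hre : (sgm * Re (RtoC (sgm * m) + RtoC th * Ci) = m)%R).
  { rewrite Re_line. rewrite <- Rmult_assoc, Hs. ring. }
  rewrite Heq. unfold Cminus. eapply Rle_trans. apply Cmod_triangle.
  rewrite Cmod_opp, Cmod_mult.
  assert (A1 : (Cmod (E ((RtoC (sgm * m) + RtoC th * Ci)%C)) <= d / 2)%R).
  { eapply Rle_trans. apply HE. rewrite Hre. unfold m. apply Rmax_l.
    rewrite Hre. apply HX. unfold m. eapply Rle_trans; [|apply Rmax_r]. apply Rmax_r. }
  assert (A2 : (Cmod (Lg ((RtoC (sgm * m) + RtoC th * Ci)%C)) < d / (2 * (Cmod t + 1)))%R).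
  { apply HR1. rewrite Hre. unfold m. eapply Rle_trans; [|apply Rmax_r]. apply Rmax_l. }
  assert (A3 : (Cmod t * Cmod (Lg ((RtoC (sgm * m) + RtoC th * Ci)%C)) <= d / 2)%R).
  { apply Rle_trans with (Cmod t * (d / (2 * (Cmod t + 1))))%R.
    apply Rmult_le_compat_l; lra.
    apply Rle_trans with ((Cmod t + 1) * (d / (2 * (Cmod t + 1))))%R.
    apply Rmult_le_compat_r. apply Rlt_le, Rdiv_lt_0_compat; lra. lra.
    right. field. lra. }
  lra.
Qed.

Theorem lemma2p1
  (d1 d2 : nat) (g : C) (al be : nat -> C)
  (t : C) (u v : nat -> C) (lng : C) (LQ LP : C -> C) (xq xp : C) (c0 : C) :
  (1 <= d1)%nat -> (1 <= d2)%nat -> g <> 0 ->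
  (* t = res_{∞_Q} P dQ *)
  is_res_inf (fun l => Pf d1 g be l * dQf d2 g al l) t ->
  (* u_K = - res_{∞_Q} P Q^{-K} dQ,  1 <= K <= d1+1 *)
  (forall K : nat, (1 <= K <= S d1)%nat ->
     is_res_inf (fun l => Pf d1 g be l * (/ Qf d2 g al l) ^ K * dQf d2 g al l) (- u K)) ->
  (* v_J = - res_{∞_P} Q P^{-J} dP,  1 <= J <= d2+1 *)
  (forall J : nat, (1 <= J <= S d2)%nat ->
     is_res_0 (fun l => Qf d2 g al l * (/ Pf d1 g be l) ^ J * dPf d1 g be l) (- v J)) ->
  (* fixed branch ln γ of the logarithm of γ *)
  cexp lng = g ->
  (* branch of ln Q(λ) near λ = ∞, compatible: ln Q(λ) = ln γ + ln λ + o(1) *)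
  (exists R0 : R, forall l : C, (R0 <= Re l)%R -> cexp (LQ l) = Qf d2 g al (cexp l)) ->
  (forall eps : R, (0 < eps)%R -> exists R0 : R, forall l : C, (R0 <= Re l)%R ->
     (Cmod (LQ l - l - lng)%C < eps)%R) ->
  (* branch of ln P(λ) near λ = 0, compatible: ln P(λ) = ln γ - ln λ + o(1) *)
  (exists R0 : R, forall l : C, (Re l <= - R0)%R -> cexp (LP l) = Pf d1 g be (cexp l)) ->
  (forall eps : R, (0 < eps)%R -> exists R0 : R, forall l : C, (Re l <= - R0)%R ->
     (Cmod (LP l + l - lng)%C < eps)%R) ->
  (* defining property of X_q = cexp xq :
     -V1(Q) + t ln Q + ∫_{X_q}^λ P dQ = O(λ^{-1}) as λ -> ∞ *)
  (exists (K0 R0 : R), forall l : C, (R0 <= Re l)%R ->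
     (Cmod (- Vpot d1 u (Qf d2 g al (cexp l)) + t * LQ l
            + lint (fun z => Pf d1 g be z * dQf d2 g al z) xq l)%C
      <= K0 * exp (- Re l))%R) ->
  (* defining property of X_p = cexp xp :
     -V2(P) + t ln P + ∫_{X_p}^λ Q dP = O(λ) as λ -> 0 *)
  (exists (K0 R0 : R), forall l : C, (Re l <= - R0)%R ->
     (Cmod (- Vpot d2 v (Pf d1 g be (cexp l)) + t * LP l
            + lint (fun z => Qf d2 g al z * dPf d1 g be z) xp l)%C
      <= K0 * exp (Re l))%R) ->
  (* c0 = (PQ - V1(Q) - V2(P))_0 *)
  is_coef0 (fun l => Pf d1 g be l * Qf d2 g al l
                     - Vpot d1 u (Qf d2 g al l) - Vpot d2 v (Pf d1 g be l)) c0 ->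
  Qf d2 g al (cexp xp) * Pf d1 g be (cexp xp)
    + lint (fun z => Pf d1 g be z * dQf d2 g al z) xp xq = c0 + 2 * t * lng
  /\
  Qf d2 g al (cexp xq) * Pf d1 g be (cexp xq)
    + lint (fun z => Qf d2 g al z * dPf d1 g be z) xq xp = c0 + 2 * t * lng.
Proof.
  intros _ _ _ _ _ _ _ _ HLQ _ HLP [K1 [R1 HBQ]] [K2 [R2 HBP]] Hc0.
  set (sq := sQ d2 g al). set (sp := sP d1 g be).
  set (sA := mul sp (der sq)). set (sB := mul sq (der sp)).
  set (sV1 := sV d1 u sq). set (sV2 := sV d2 v sp).
  assert (LA : forall a b, lint (fun z => Pf d1 g be z * dQf d2 g al z) a b = anti sA b - anti sA a).
  { intros a b. apply lint_anti. intros z. unfold sA, sq, sp. rewrite ev_mul, <- dQ_ev, <- P_ev. ring. }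
  assert (LB : forall a b, lint (fun z => Qf d2 g al z * dPf d1 g be z) a b = anti sB b - anti sB a).
  { intros a b. apply lint_anti. intros z. unfold sB, sq, sp. rewrite ev_mul, <- dP_ev, <- Q_ev. ring. }
  assert (VQ : forall l, Vpot d1 u (Qf d2 g al (cexp l)) = ev sV1 l).
  { intros l. rewrite Q_ev. unfold sV1, sq. apply V_ev. }
  assert (VP : forall l, Vpot d2 v (Pf d1 g be (cexp l)) = ev sV2 l).
  { intros l. rewrite P_ev. unfold sV2, sp. apply V_ev. }
  destruct (asym_apply 1%R (antiE sA ++ scl (-1) sV1) (cst sA + t) (t * lng - anti sA xq)
     (fun l => - Vpot d1 u (Qf d2 g al (cexp l)) + t * LQ l
            + lint (fun z => Pf d1 g be z * dQf d2 g al z) xq l)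
     (fun l => LQ l - l - lng) t K1 R1) as [_ HQ].
  { ring. }
  { intros l Hl. rewrite Rmult_1_l in *. apply HBQ. exact Hl. }
  { intros eps He. destruct (HLQ eps He) as [R HR]. exists R. intros l Hl. rewrite Rmult_1_l in Hl. apply HR; exact Hl. }
  { intros l. rewrite ev_app, ev_scl, VQ, LA, (anti_split sA l). ring. }
  destruct (asym_apply (-1)%R (antiE sB ++ scl (-1) sV2) (cst sB - t) (t * lng - anti sB xp)
     (fun l => - Vpot d2 v (Pf d1 g be (cexp l)) + t * LP l
            + lint (fun z => Qf d2 g al z * dPf d1 g be z) xp l)
     (fun l => LP l + l - lng) t K2 R2) as [_ HP].
  { ring. }
  { intros l Hl. replace (- (-1 * Re l))%R with (Re l) by ring. apply HBP. lra. }
  { intros eps He. destruct (HLP eps He) as [R HR]. exists R. intros l Hl. apply HR; lra. }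
  { intros l. rewrite ev_app, ev_scl, VP, LB, (anti_split sB l). ring. }
  rewrite cst_app, cst_scl, cst_antiE in HQ, HP.
  assert (AQ : anti sA xq = t * lng - cst sV1).
  { match type of HQ with ?X = _ => transitivity (t * lng - cst sV1 - X); [ring|rewrite HQ; ring] end. }
  assert (AP : anti sB xp = t * lng - cst sV2).
  { match type of HP with ?X = _ => transitivity (t * lng - cst sV2 - X); [ring|rewrite HP; ring] end. }
  destruct (coef_cst _ _ Hc0) as [sc [Hsc Hcst]].
  assert (Hc : c0 = cst (mul sp sq) - cst sV1 - cst sV2).
  { rewrite <- Hcst. transitivity (cst (mul sp sq ++ scl (-1) sV1 ++ scl (-1) sV2)).
    2:{ rewrite !cst_app, !cst_scl. ring. }
    symmetry. apply cst_unique. intros l. rewrite <- Hsc, !ev_app, !ev_scl, ev_mul.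
    rewrite <- VQ, <- VP. unfold sp, sq. rewrite <- P_ev, <- Q_ev. ring. }
  assert (Hpair := fun l => anti_pair sp sq l). fold sA sB in Hpair.
  rewrite LA, LB, !Q_ev, !P_ev. fold sq sp.
  assert (E1 := Hpair xp). assert (E2 := Hpair xq). rewrite ev_mul in E1, E2.
  split.
  - transitivity (anti sA xq + (ev sp xp * ev sq xp - anti sA xp)). ring.
    rewrite Hc. 
    replace (ev sp xp * ev sq xp - anti sA xp) with (anti sB xp + cst (mul sp sq)) by (assert (E1' : ev sp xp * ev sq xp = anti sA xp + anti sB xp + cst (mul sp sq)) by (rewrite E1; ring); rewrite E1'; ring).
    rewrite AQ, AP. ring.
  - transitivity (anti sB xp + (ev sp xq * ev sq xq - anti sB xq)). ring.
    rewrite Hc.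
    replace (ev sp xq * ev sq xq - anti sB xq) with (anti sA xq + cst (mul sp sq)) by (assert (E2' : ev sp xq * ev sq xq = anti sA xq + anti sB xq + cst (mul sp sq)) by (rewrite E2; ring); rewrite E2'; ring).
    rewrite AQ, AP. ring.
Qed.
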